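(* Let $\mathscr Q_n$ be a non-singular quadric in $\mathrm{PG}(n,2)$ of projective index $g\ge 1$, let $0\le s<g$, let $\alpha_s$ be an $s$-dimensional subspace contained in $\mathscr Q_n$, and let $\Gamma_s$ be the graph constructed from $\alpha_s$ as described below. Then for distinct vertices $X,Y$ of $\Gamma_s$: if one of $X,Y$ has type (ii) and the other has type (iii), then $X,Y$ are adjacent in $\Gamma_s$ if and only if the line $XY$ is not contained in $\mathscr Q_n$ (i.e. it is a 2-secant of $\mathscr Q_n$); otherwise $X,Y$ are adjacent in $\Gamma_s$ if and only if the line $XY$ is contained in $\mathscr Q_n$. In particular, two type (i) vertices are always adjacent, and a type (i) vertex is always adjacent to a type (ii) vertex.
   Context: A non-singular quadric $\mathscr Q_n$ in $\mathrm{PG}(n,2)$ is the point set of a non-degenerate quadric; its projective index $g$ is the largest dimension of a projective subspace contained in $\mathscr Q_n$. The point-graph $\Gamma$ has vertex set the points of $\mathscr Q_n$, two distinct points adjacent iff the line joining them is contained in $\mathscr Q_n$. A point $X$ of $\mathscr Q_n$ has type (i) if $X\in\alpha_s$; type (ii) if $X\notin\alpha_s$ and $\langle\alpha_s,X\rangle\subseteq\mathscr Q_n$; type (iii) otherwise. Let $\mathcal X_s$ be the type (ii) points and $\mathcal Y_s$ the points of type (i) or (iii). The graph $\Gamma_s$ has the same vertex set as $\Gamma$ and the same edges, except that for each vertex $R\in\mathcal Y_s$ having exactly $\frac12|\mathcal X_s|$ neighbours in $\mathcal X_s$ (in $\Gamma$), those edges are deleted and $R$ is joined instead to the other $\frac12|\mathcal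 X_s|$ vertices of $\mathcal X_s$. A 2-secant is a line meeting $\mathscr Q_n$ in exactly two points. *)

(* Defs.v *)
(* points of PG(n,2) are nonzero row vectors in 'F_2^(n+1). *)
From mathcomp Require Import all_boot all_order all_algebra all_fingroup.
Set Implicit Arguments. Unset Strict Implicit. Unset Printing Implicit Defensive.
Import GRing.Theory.
Local Open Scope ring_scope.

Section Quadric.
Variable n : nat.
Notation vec := 'rV['F_2]_(n.+1).

(* Quadratic form Q(x) = x A x^T (every quadratic form over F_2 arises so). *)
Definition qf (A : 'M['F_2]_(n.+1)) (x : vec) : 'F_2 := (x *m A *m x^T) 0 0.

(* Associated polar (bilinear) form B(x,y) = Q(x+y) - Q(x) - Q(y). *)
Definition polar (A : 'M['F_2]_(n.+1)) (x y : vec) : 'F_2 :=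
  (x *m (A + A^T) *m y^T) 0 0.

Definition nonsingular (A : 'M['F_2]_(n.+1)) : Prop :=
  forall v : vec, v != 0 -> qf A v = 0 -> exists w : vec, polar A v w != 0.

(* The row space of U is contained in the quadric (a projective subspace
   of projective dimension \rank U - 1 lying on Q). *)
Definition tsing (A : 'M['F_2]_(n.+1)) m (U : 'M['F_2]_(m, n.+1)) : bool :=
  [forall v : vec, (v <= U)%MS ==> (qf A v == 0)].

Definition proj_index (A : 'M['F_2]_(n.+1)) (g : nat) : Prop :=
  (exists U : 'M['F_2]_(n.+1), tsing A U /\ \rank U = g.+1) /\
  (forall U : 'M['F_2]_(n.+1), tsing A U -> (\rank U <= g.+1)%N).

Definition qpoints (A : 'M['F_2]_(n.+1)) : {set vec} :=
  [set x : vec | (x != 0) && (qf A x == 0)].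

Definition line_in (A : 'M['F_2]_(n.+1)) (x y : vec) : bool := tsing A (col_mx x y).

Definition adj (A : 'M['F_2]_(n.+1)) (x y : vec) : bool := (x != y) && line_in A x y.

(* Types of points relative to alpha_s (the row space of U). *)
Definition type1 (U : 'M['F_2]_(n.+1)) (x : vec) : bool := (x <= U)%MS.
Definition type2 (A U : 'M['F_2]_(n.+1)) (x : vec) : bool :=
  ~~ (x <= U)%MS && tsing A (col_mx U x).
Definition type3 (A U : 'M['F_2]_(n.+1)) (x : vec) : bool :=
  ~~ type1 U x && ~~ type2 A U x.

Definition Xs (A U : 'M['F_2]_(n.+1)) : {set vec} :=
  [set x in qpoints A | type2 A U x].
Definition Ys (A U : 'M['F_2]_(n.+1)) : {set vec} := qpoints A :\: Xs A U.

Definition switched (A U : 'M['F_2]_(n.+1)) (r : vec) : bool :=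
  (r \in Ys A U) &&
  (2 * #|[set x in Xs A U | adj A r x]| == #|Xs A U|)%N.

Definition adj_s (A U : 'M['F_2]_(n.+1)) (x y : vec) : bool :=
  if ((x \in Xs A U) && switched A U y) || ((y \in Xs A U) && switched A U x)
  then (x != y) && ~~ adj A x y
  else adj A x y.

End Quadric.

(* Main.v *)
Require Import Defs.
From mathcomp Require Import all_boot all_order all_algebra all_fingroup.
From mathcomp Require Import ring zify.
Import GRing.Theory.
Local Open Scope ring_scope.
Set Implicit Arguments. Unset Strict Implicit.

Section S.
Variable n : nat.
Variable A : 'M['F_2]_(n.+1).
Notation vec := 'rV['F_2]_(n.+1).

Lemma F2_cases (a : 'F_2) : a = 0 \/ a = 1.
Proof. by case: a => [[|[|k]] Hk]; [left|right|]; try apply: val_inj. Qed.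

Lemma mxD00 (P Q : 'M['F_2]_1) : (P + Q) 0 0 = P 0 0 + Q 0 0.
Proof. by rewrite mxE. Qed.

Lemma trE (x y : vec) (B : 'M['F_2]_(n.+1)) :
  (x *m B^T *m y^T) 0 0 = (y *m B *m x^T) 0 0.
Proof.
have -> : x *m B^T *m y^T = (y *m B *m x^T)^T by rewrite !trmx_mul trmxK mulmxA.
by rewrite mxE.
Qed.

Lemma qfD (x y : vec) : qf A (x + y) = qf A x + qf A y + polar A x y.
Proof.
rewrite /qf /polar linearD /= !(mulmxDl, mulmxDr) !mxD00 trE.
ring.
Qed.

Lemma polarDr (x y z : vec) : polar A x (y + z) = polar A x y + polar A x z.
Proof. by rewrite /polar [(y + z)^T]linearD /= mulmxDr mxD00. Qed.

Lemma polarC (x y : vec) : polar A x y = polar A y x.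
Proof.
rewrite /polar !(mulmxDl, mulmxDr) !mxD00 trE.
have -> : (x *m A *m y^T) 0 0 = (y *m A^T *m x^T) 0 0 by rewrite trE.
by rewrite addrC.
Qed.

Lemma qfZ (a : 'F_2) (x : vec) : qf A (a *: x) = a ^+ 2 * qf A x.
Proof.
by rewrite /qf linearZ /= -!scalemxAl -scalemxAr !mxE mulrA expr2.
Qed.

Lemma qf0 : qf A 0 = 0.
Proof. by rewrite /qf !mul0mx mxE. Qed.

Lemma tsing_rV (x : vec) : tsing A x = (qf A x == 0).
Proof.
apply/forallP/idP => [H|/eqP H v]; first by have := H x; rewrite submx_refl.
apply/implyP => /sub_rVP [a ->]; by rewrite qfZ H mulr0.
Qed.

Lemma tsing_sub m1 m2 (U : 'M['F_2]_(m1, n.+1)) (V : 'M['F_2]_(m2, n.+1)) :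
  tsing A U -> (V <= U)%MS -> tsing A V.
Proof.
move=> /forallP H VU; apply/forallP => v; apply/implyP => vV.
by have := H v; rewrite (submx_trans vV VU).
Qed.

Lemma tsing_polar m (U : 'M['F_2]_(m, n.+1)) u v :
  tsing A U -> (u <= U)%MS -> (v <= U)%MS -> polar A u v = 0.
Proof.
move=> /forallP H uU vU.
have := H (u + v); rewrite addmx_sub // qfD.
have := H u; rewrite uU => /eqP ->.
by have := H v; rewrite vU => /eqP ->; rewrite !add0r => /eqP.
Qed.

Lemma tsing_colP m (U : 'M['F_2]_(m, n.+1)) (x : vec) :
  tsing A (col_mx U x) =
  [&& tsing A U, qf A x == 0 & [forall u : vec, (u <= U)%MS ==> (polar A u x == 0)]].
Proof.
apply/idP/idP.
  move=> H; have HU : tsing A U.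
    by apply: tsing_sub H _; rewrite -addsmxE addsmxSl.
  have Hx : (x <= col_mx U x)%MS by rewrite -addsmxE addsmxSr.
  rewrite HU /=; have := tsing_sub H Hx; rewrite tsing_rV => ->.
  apply/forallP => u; apply/implyP => uU; apply/eqP.
  apply: (tsing_polar H) => //.
  by rewrite -addsmxE (submx_trans uU) // addsmxSl.
case/and3P => HU /eqP Hx /forallP Hp; apply/forallP => v; apply/implyP.
rewrite -addsmxE => /sub_addsmxP [[u1 u2] /= ->].
have u1U : (u1 *m U <= U)%MS by apply: submxMl.
case: (F2_cases (u2 0 0)) => Hu2.
  have -> : u2 *m x = 0.
    by apply/rowP => j; rewrite !mxE big_ord1 Hu2 mul0r.
  by rewrite addr0; move/forallP: HU => /(_ (u1 *m U)); rewrite u1U.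
have -> : u2 *m x = x.
  by apply/rowP => j; rewrite !mxE big_ord1 Hu2 mul1r.
rewrite qfD Hx; move/forallP: HU => /(_ (u1 *m U)); rewrite u1U => /eqP ->.
by move: (Hp (u1 *m U)); rewrite u1U => /eqP ->; rewrite !addr0.
Qed.


Lemma polarZl (a : 'F_2) (x y : vec) : polar A (a *: x) y = a * polar A x y.
Proof. by rewrite /polar -!scalemxAl mxE. Qed.

Lemma line_inE (r x : vec) : qf A r = 0 -> qf A x = 0 ->
  line_in A r x = (polar A r x == 0).
Proof.
move=> Hr Hx; rewrite /line_in tsing_colP tsing_rV Hr Hx eqxx /=.
apply/forallP/eqP => [H|H u].
  by have := H r; rewrite submx_refl => /eqP.
apply/implyP => /sub_rVP [a ->]; by rewrite polarZl H mulr0.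
Qed.

Lemma entry_tr k (P : 'rV['F_2]_(n.+1)) (X : 'M['F_2]_(k, n.+1)) j :
  (P *m X^T) 0 j = (P *m (row j X)^T) 0 0.
Proof. by rewrite !mxE; apply: eq_bigr => i _; rewrite !mxE. Qed.

Lemma Xs_char U x : tsing A U ->
  (x \in Xs A U) = [&& x != 0, qf A x == 0, ~~ (x <= U)%MS &
     [forall u : vec, (u <= U)%MS ==> (polar A u x == 0)]].
Proof.
move=> HU; rewrite /Xs /qpoints !inE /type2 tsing_colP HU /=.
by case: (x != 0); case: (qf A x == 0); case: (x <= U)%MS.
Qed.

Lemma exists_type2 g s U : proj_index A g -> (s < g)%N -> \rank U = s.+1 ->
  tsing A U -> exists x, x \in Xs A U.
Proof.
case=> [[V [HV rV]] _] sg rU HU.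
set M := A + A^T.
have polM x y : polar A x y = (x *m M *m y^T) 0 0 by [].
have keyV (x : vec) : (x <= V)%MS -> x *m M *m V^T = 0.
  move=> xV; apply/rowP => j; rewrite entry_tr -polM [RHS]mxE.
  by apply: (tsing_polar HV) => //; apply: row_sub.
case: (boolP [exists x, x \in Xs A U]) => [/existsP //|].
rewrite negb_exists => /forallP Hno; exfalso.
have claim (x : vec) : (x <= V)%MS -> x *m M *m U^T = 0 -> (x <= U)%MS.
  move=> xV xK; apply/negPn/negP => nxU; move: (Hno x).
  rewrite Xs_char // nxU /=; case/negP; apply/and3P; split.
  - by apply: contra nxU => /eqP ->; rewrite sub0mx.
  - by move/forallP: HV => /(_ x); rewrite xV.
  apply/forallP => u; apply/implyP => /submxP [D ->].
  rewrite polarC polM trmx_mul mulmxA xK mul0mx mxE //.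
have MT : M^T = M by rewrite /M linearD /= trmxK addrC.
have h1 := mxrank_mul_ker V (M *m U^T).
have h2 := mxrank_mul_ker U (M *m V^T).
have h3 : \rank (V *m (M *m U^T)) = \rank (U *m (M *m V^T)).
  by rewrite -mxrank_tr !trmx_mul trmxK MT mulmxA.
have h4 : (V :&: kermx (M *m U^T) <= U :&: kermx (M *m V^T))%MS.
  set K1 := (V :&: _)%MS.
  have K1V : (K1 <= V)%MS by apply: capmxSl.
  rewrite sub_capmx; apply/andP; split.
    apply/row_subP => i; apply: claim.
      exact: submx_trans (row_sub i K1) K1V.
    rewrite -mulmxA; apply/sub_kermxP.
    apply: submx_trans (row_sub i K1) _; exact: capmxSr.
  apply/sub_kermxP; case/submxP: K1V => D ->; rewrite -mulmxA.
  have -> : V *m (M *m V^T) = 0.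
    apply/row_matrixP => i; rewrite row_mul row0 mulmxA; apply: keyV.
    exact: row_sub.
  by rewrite mulmx0.
have := mxrankS h4; rewrite -(leq_add2l (\rank (V *m (M *m U^T)))) h1 h3 h2.
by rewrite rV rU ltnS leqNgt sg.
Qed.


Lemma qpE x : (x \in qpoints A) = (x != 0) && (qf A x == 0).
Proof. by rewrite /qpoints inE. Qed.

Lemma switched_type3 U r : tsing A U -> r \in qpoints A -> type3 A U r ->
  switched A U r.
Proof.
move=> HU rQ /andP [n1 n2].
move: (rQ); rewrite qpE => /andP [r0 /eqP qr].
have [w0 w0U pw] : exists2 w0, (w0 <= U)%MS & polar A r w0 = 1.
  move: n2; rewrite /type2 n1 /= tsing_colP HU qr eqxx /= negb_forall.
  case/existsP => u; rewrite negb_imply => /andP [uU pu]; exists u => //.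
  by rewrite polarC; case: (F2_cases (polar A u r)) pu => ->; rewrite ?eqxx.
have rnX : r \notin Xs A U by rewrite /Xs inE negb_and n2 orbT.
have qw : qf A w0 = 0.
  by move/forallP: HU => /(_ w0); rewrite w0U => /eqP.
have fX x : x \in Xs A U -> x + w0 \in Xs A U.
  rewrite !Xs_char // => /and4P [nx0 /eqP qx nxU /forallP px].
  apply/and4P; split.
  - apply: contra nxU => /eqP /(canRL (addrK w0)) ->.
    by rewrite sub0r eqmx_opp.
  - by rewrite qfD qx qw polarC; move: (px w0); rewrite w0U => /eqP ->;
      rewrite !addr0.
  - apply: contra nxU => h; rewrite -(addrK w0 x) addmx_sub // eqmx_opp //.
  - apply/forallP => u; apply/implyP => uU; rewrite polarDr.
    move: (px u); rewrite uU => /eqP ->.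
    by rewrite (tsing_polar HU uU w0U) addr0.
have rx x : x \in Xs A U -> r != x.
  by move=> xX; apply: contraNneq rnX => ->.
have fA x : x \in Xs A U -> adj A r (x + w0) = ~~ adj A r x.
  move=> xX; have xX' := fX x xX.
  rewrite /adj rx // rx //= .
  have qx : qf A x = 0 by move: xX; rewrite Xs_char // => /and4P [_ /eqP -> _ _].
  have qx' : qf A (x + w0) = 0.
    by move: xX'; rewrite Xs_char // => /and4P [_ /eqP -> _ _].
  rewrite !line_inE // polarDr pw.
  by case: (F2_cases (polar A r x)) => ->.
rewrite /switched in_setD rnX rQ /= setIdE.
set P := [set x | adj A r x].
have Pin z : (z \in P) = adj A r z by rewrite /P inE.
have e : #|Xs A U :&: P| = #|Xs A U :\: P|.
  apply/eqP; rewrite eqn_leq; apply/andP; split.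
    rewrite -(card_imset _ (addIr w0)); apply: subset_leq_card.
    apply/subsetP => y /imsetP [x xS ->]; move: xS.
    rewrite in_setI Pin => /andP [xX xP].
    by rewrite in_setD Pin fA // xP fX.
  rewrite -(card_imset _ (addIr w0)); apply: subset_leq_card.
  apply/subsetP => y /imsetP [x xS ->]; move: xS.
  rewrite in_setD Pin => /andP [xP xX].
  by rewrite in_setI Pin fA // xP fX.
by rewrite -(cardsID P (Xs A U)) e mul2n addnn.
Qed.

Lemma not_switched_type1 g s U r : proj_index A g -> (s < g)%N ->
  \rank U = s.+1 -> tsing A U -> type1 U r -> ~~ switched A U r.
Proof.
move=> pi sg rU HU; rewrite /type1 => rU'.
have [x0 x0X] := exists_type2 pi sg rU HU.
have qr : qf A r = 0 by move/forallP: HU => /(_ r); rewrite rU' => /eqP.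
rewrite /switched.
have -> : [set x in Xs A U | adj A r x] = Xs A U.
  apply/setP => x; rewrite inE; case xX: (x \in Xs A U) => //=.
  move: xX; rewrite Xs_char // => /and4P [_ /eqP qx nxU /forallP px].
  rewrite /adj line_inE //; apply/andP; split.
    by apply: contraNneq nxU => <-.
  by move: (px r); rewrite rU'.
have : (0 < #|Xs A U|)%N by apply/card_gt0P; exists x0.
rewrite negb_and; move=> h; apply/orP; right; apply/eqP; lia.
Qed.

End S.

Theorem corollary4p5 (n : nat) (A : 'M['F_2]_(n.+1)) (g s : nat)
    (U : 'M['F_2]_(n.+1)) :
  nonsingular A -> proj_index A g -> (1 <= g)%N -> (s < g)%N ->
  \rank U = s.+1 -> tsing A U ->
  forall x y : 'rV['F_2]_(n.+1),
    x \in qpoints A -> y \in qpoints A -> x != y ->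
    (((type2 A U x && type3 A U y) || (type2 A U y && type3 A U x)) ->
       adj_s A U x y = ~~ line_in A x y) /\
    (~~ ((type2 A U x && type3 A U y) || (type2 A U y && type3 A U x)) ->
       adj_s A U x y = line_in A x y) /\
    (type1 U x -> type1 U y -> adj_s A U x y) /\
    (type1 U x -> type2 A U y -> adj_s A U x y).
Proof.
move=> ns pi g1 sg rU HU x y xQ yQ xy.
have t12 z : type1 U z -> type2 A U z = false by rewrite /type2 /type1 => ->.
have t13 z : type1 U z -> type3 A U z = false by rewrite /type3 => ->.
have Xz z : z \in qpoints A -> (z \in Xs A U) = type2 A U z.
  by rewrite /Xs inE => ->.
have sw z : z \in qpoints A -> switched A U z = type3 A U z.
  move=> zQ; case t1: (type1 U z).
    by rewrite t13 //; apply/negbTE; exact: (not_switched_type1 pi sg rU HU t1).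
  case t2: (type2 A U z).
    by rewrite /type3 t2 andbF /switched /Ys in_setD Xz // t2.
  have t3 : type3 A U z by rewrite /type3 t1 t2.
  by rewrite t3; apply: switched_type3.
rewrite /adj_s !Xz // !sw // /adj xy /=.
split; first by move=> ->.
split; first by move/negbTE => ->.
split.
  move=> h1 h2; rewrite !t12 // !t13 //= /line_in; apply: (tsing_sub HU).
  by rewrite -addsmxE addsmx_sub; apply/andP; split.
move=> h1 h2; rewrite (t12 x h1) (t13 x h1) andbF andFb orbF /line_in.
move: h2 => /andP [_ H]; apply: (tsing_sub H).
by rewrite -!addsmxE addsmxS.
Qed.
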